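(* Let $\Delta$ be the root system of a simple complex Lie algebra, with simple roots $\Pi$ and highest root $\theta$. Let $\alpha\in\Pi$ and let $i,j\ge 1$ be integers with $i+j\le\mathrm{ht}_\alpha(\theta)$. Then for any $\mu\in\Delta_\alpha(i)$ there is $\nu\in\Delta_\alpha(j)$ such that $\mu+\nu\in\Delta_\alpha(i+j)$ (in particular $\mu+\nu$ is a root).
   Context: For $\mu=\sum_{\beta\in\Pi}c_\beta\beta$, $\mathrm{ht}_\alpha(\mu)=c_\alpha$, and $\Delta_\alpha(i)=\{\gamma\in\Delta\mid\mathrm{ht}_\alpha(\gamma)=i\}$. *)

(* Defs.v *)
(* Root systems of simple complex Lie algebras, modelled as
   irreducible reduced crystallographic root systems in a Euclidean space R^n. *)
From HB Require Import structures.
From mathcomp Require Import all_boot all_order all_algebra.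
Set Implicit Arguments. Unset Strict Implicit. Unset Printing Implicit Defensive.
Import Order.TTheory GRing.Theory Num.Theory.
Local Open Scope ring_scope.

Section RootSystems.
Variables (R : realFieldType) (n : nat).

Definition dotv (u v : 'rV[R]_n) : R := (u *m v^T) 0 0.

Definition cartan (b a : 'rV[R]_n) : R := 2 * dotv b a / dotv a a.

Definition is_irred_root_system (Delta : seq 'rV[R]_n) : Prop :=
  [/\ Delta != [::], 0 \notin Delta &
      (forall v : 'rV[R]_n, exists c : 'I_(size Delta) -> R,
          v = \sum_(k < size Delta) c k *: Delta`_k)] /\
  [/\ (forall a b, a \in Delta -> b \in Delta -> b - cartan b a *: a \in Delta),
      (forall a b, a \in Delta -> b \in Delta -> exists z : int, cartan b a = z%:~R),
      (forall a (c : R), a \in Delta -> c *: a \in Delta -> c = 1 \/ c = -1)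
    & (forall P : pred 'rV[R]_n,
         (exists2 a, a \in Delta & P a) -> (exists2 b, b \in Delta & ~~ P b) ->
         exists a b, [/\ a \in Delta, b \in Delta, P a, ~~ P b & dotv a b != 0])].

Definition is_base (Delta : seq 'rV[R]_n) (l : nat) (pi : 'I_l -> 'rV[R]_n) : Prop :=
  [/\ (forall k, pi k \in Delta),
      (forall c : 'I_l -> R, \sum_k c k *: pi k = 0 -> forall k, c k = 0)
    & (forall g, g \in Delta -> exists c : 'I_l -> int,
          g = \sum_k (c k)%:~R *: pi k /\
          ((forall k, 0 <= c k) \/ (forall k, c k <= 0)))].

(* ht_alpha(mu) = h, where alpha = pi a: the coefficient of pi a in the
   (unique, by linear independence) expansion of mu in the simple roots. *)
Definition ht_eq (l : nat) (pi : 'I_l -> 'rV[R]_n) (a : 'I_l) (mu : 'rV[R]_n) (h : int) : Prop :=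
  exists c : 'I_l -> int, mu = \sum_k (c k)%:~R *: pi k /\ c a = h.

Definition is_highest_root (Delta : seq 'rV[R]_n) (l : nat) (pi : 'I_l -> 'rV[R]_n)
  (theta : 'rV[R]_n) : Prop :=
  theta \in Delta /\
  forall g, g \in Delta -> exists c : 'I_l -> int,
    theta - g = \sum_k (c k)%:~R *: pi k /\ (forall k, 0 <= c k).

End RootSystems.

(* Main.v *)
Require Import Defs.
From mathcomp Require Import all_boot all_order all_algebra.
From mathcomp Require Import ring lra zify.
From Stdlib Require Import ClassicalEpsilon.
Import Order.TTheory GRing.Theory Num.Theory.
Local Open Scope ring_scope.
Section S.
Variables (R : realFieldType) (n : nat).
Implicit Types u v w : 'rV[R]_n.
Lemma dotvE u v : dotv u v = \sum_j u 0 j * v 0 j.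
Proof. by rewrite /dotv mxE; apply: eq_bigr => j _; rewrite mxE. Qed.
Lemma dotvC u v : dotv u v = dotv v u.
Proof. by rewrite !dotvE; apply: eq_bigr => j _; rewrite mulrC. Qed.
Lemma dotvDl u v w : dotv (u + v) w = dotv u w + dotv v w.
Proof. by rewrite !dotvE -big_split; apply: eq_bigr => j _; rewrite mxE mulrDl. Qed.
Lemma dotvZl c u w : dotv (c *: u) w = c * dotv u w.
Proof. by rewrite !dotvE mulr_sumr; apply: eq_bigr => j _; rewrite mxE mulrA. Qed.
Lemma dotvNl u w : dotv (- u) w = - dotv u w.
Proof. by rewrite -scaleN1r dotvZl mulN1r. Qed.
Lemma dotvBl u v w : dotv (u - v) w = dotv u w - dotv v w.
Proof. by rewrite dotvDl dotvNl. Qed.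
Lemma dotv_suml I (r : seq I) (F : I -> 'rV[R]_n) w :
  dotv (\sum_(i <- r) F i) w = \sum_(i <- r) dotv (F i) w.
Proof.
elim: r => [|x r IH]; first by rewrite !big_nil dotvE big1 // => j _; rewrite mxE mul0r.
by rewrite !big_cons dotvDl IH.
Qed.
Lemma dotvDr u v w : dotv w (u + v) = dotv w u + dotv w v.
Proof. by rewrite dotvC dotvDl !(dotvC w). Qed.
Lemma dotvZr c u w : dotv w (c *: u) = c * dotv w u.
Proof. by rewrite dotvC dotvZl dotvC. Qed.
Lemma dotvBr u v w : dotv w (u - v) = dotv w u - dotv w v.
Proof. by rewrite dotvC dotvBl !(dotvC w). Qed.
Lemma dotv_sumr I (r : seq I) (F : I -> 'rV[R]_n) w :
  dotv w (\sum_(i <- r) F i) = \sum_(i <- r) dotv w (F i).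
Proof. by rewrite dotvC dotv_suml; apply: eq_bigr => i _; rewrite dotvC. Qed.
Lemma dotv_ge0 u : 0 <= dotv u u.
Proof. by rewrite dotvE sumr_ge0 // => j _; rewrite -expr2 sqr_ge0. Qed.
Lemma dotv_eq0 u : (dotv u u == 0) = (u == 0).
Proof.
apply/idP/idP; last by move/eqP->; rewrite dotvE big1 // => j _; rewrite mxE mul0r.
rewrite dotvE psumr_eq0; last by move=> j _; rewrite -expr2 sqr_ge0.
move/allP => H; apply/eqP/rowP => j; rewrite mxE.
by have := H j (mem_index_enum j); rewrite -expr2 sqrf_eq0 => /eqP.
Qed.
Lemma dotv_gt0 u : u != 0 -> 0 < dotv u u.
Proof. by move=> h; rewrite lt_def dotv_eq0 h dotv_ge0. Qed.
Variables (l : nat) (pi : 'I_l -> 'rV[R]_n) (a : 'I_l).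
Hypothesis lin : forall c : 'I_l -> R, \sum_k c k *: pi k = 0 -> forall k, c k = 0.

Lemma ht_uniq v h1 h2 : ht_eq pi a v h1 -> ht_eq pi a v h2 -> h1 = h2.
Proof.
move=> [c1 [-> <-]] [c2 [e <-]].
have := @lin (fun k => (c1 k - c2 k)%:~R).
under eq_bigr => k _ do rewrite intrB scalerBl.
rewrite sumrB e subrr => /(_ erefl a) /eqP.
by rewrite intrB subr_eq0 eqr_int => /eqP.
Qed.

Lemma ht_B u v h1 h2 : ht_eq pi a u h1 -> ht_eq pi a v h2 -> ht_eq pi a (u - v) (h1 - h2).
Proof.
move=> [c1 [-> <-]] [c2 [-> <-]]; exists (fun k => c1 k - c2 k); split => //.
by rewrite -sumrB; apply: eq_bigr => k _; rewrite intrB scalerBl.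
Qed.

Lemma ht_Z u h z : ht_eq pi a u h -> ht_eq pi a (z%:~R *: u) (z * h).
Proof.
move=> [c [-> <-]]; exists (fun k => z * c k); split => //.
by rewrite scaler_sumr; apply: eq_bigr => k _; rewrite scalerA intrM.
Qed.

Lemma ht_pi b : ht_eq pi a (pi b) (b == a)%:R.
Proof.
exists (fun k => (k == b)%:R); split; last by rewrite eq_sym.
rewrite (bigD1 b) //= eqxx scale1r big1 ?addr0 // => k /negbTE ->.
by rewrite scale0r.
Qed.
Arguments ht_uniq {v h1 h2}.
Arguments ht_B {u v h1 h2}.
Arguments ht_Z {u h}.
Variable Delta : seq 'rV[R]_n.
Hypothesis nz : 0 \notin Delta.
Hypothesis refl : forall a b : 'rV[R]_n, a \in Delta -> b \in Delta -> b - cartan b a *: a \in Delta.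
Hypothesis integ : forall a b : 'rV[R]_n, a \in Delta -> b \in Delta -> exists z : int, cartan b a = z%:~R.

Arguments dotv_gt0 {u}.
Lemma root_nz {x} : x \in Delta -> x != 0.
Proof. by apply: contraTneq => ->. Qed.

Lemma cartan_self (x : 'rV[R]_n) : x != 0 -> cartan x x = 2.
Proof. by move=> h; rewrite /cartan mulfK // dotv_eq0. Qed.

Lemma rootN {x} : x \in Delta -> - x \in Delta.
Proof.
move=> h; have := refl _ _ h h; rewrite cartan_self ?root_nz //.
by have -> : x - 2 *: x = - x by rewrite scaler_nat mulr2n opprD addNKr.
Qed.

Lemma cartan_mul (x y : 'rV[R]_n) : y != 0 -> cartan x y * dotv y y = 2 * dotv x y.
Proof. by move=> h; rewrite /cartan mulfVK // dotv_eq0. Qed.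

Lemma root_sub g m : g \in Delta -> m \in Delta -> 0 < dotv g m -> g != m ->
  g - m \in Delta.
Proof.
move=> gD mD p0 gm.
have A0 := dotv_gt0 (root_nz gD); have B0 := dotv_gt0 (root_nz mD).
have [z1 e1] := integ _ _ mD gD; have [z2 e2] := integ _ _ gD mD.
have c1 := cartan_mul g m (root_nz mD); have c2 := cartan_mul m g (root_nz gD).
rewrite e1 in c1; rewrite e2 dotvC in c2.
have z1p : 0 < z1 by rewrite -(ltr0z R); nra.
have z2p : 0 < z2 by rewrite -(ltr0z R); nra.
have [e|n1] := eqVneq z1 1.
  by have := refl _ _ mD gD; rewrite e1 e scale1r.
have [e|n2] := eqVneq z2 1.
  by have := rootN (refl _ _ gD mD); rewrite e2 e scale1r opprB.
have h1 : 2 <= z1 by lia.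
have h2 : 2 <= z2 by lia.
have r1 : 2 <= z1%:~R :> R by rewrite (ler_int R 2).
have r2 : 2 <= z2%:~R :> R by rewrite (ler_int R 2).
have : dotv (g - m) (g - m) <= 0.
  rewrite !dotvBl !dotvBr (dotvC m g); nra.
have := dotv_ge0 (g - m) => q1 q2.
have : dotv (g - m) (g - m) == 0 by rewrite eq_le q1 q2.
by rewrite dotv_eq0 subr_eq0 (negbTE gm).
Qed.
Hypothesis pinD : forall k, pi k \in Delta.

Definition htb v h : bool :=
  if excluded_middle_informative (ht_eq pi a v h) then true else false.
Lemma htbP v h : reflect (ht_eq pi a v h) (htb v h).
Proof. by rewrite /htb; case: excluded_middle_informative => H; constructor. Qed.

Lemma ht_refl b g h : b != a -> g \in Delta -> ht_eq pi a g h ->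
  ht_eq pi a (g - cartan g (pi b) *: pi b) h.
Proof.
move=> ba gD hg; have [z ->] := integ _ _ (pinD b) gD.
have := ht_B hg (ht_Z z (ht_pi b)).
by rewrite (negbTE ba) mulr0 subr0.
Qed.

Lemma ht_0 : ht_eq pi a 0 0.
Proof. by exists (fun _ => 0); split => //; rewrite big1 // => k _; rewrite scale0r. Qed.

Lemma ht_D u v h1 h2 : ht_eq pi a u h1 -> ht_eq pi a v h2 -> ht_eq pi a (u + v) (h1 + h2).
Proof.
move=> h h'; have := ht_B h (ht_B ht_0 h'); by rewrite !sub0r !opprK.
Qed.

Lemma ht_sum (L : seq 'rV[R]_n) (m : int) : (forall g, g \in L -> ht_eq pi a g m) ->
  ht_eq pi a (\sum_(g <- L) g) ((size L)%:Z * m).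
Proof.
elim: L => [|x L IH] H; first by rewrite big_nil mul0r; exact: ht_0.
rewrite big_cons /= -[(size L).+1]addn1 PoszD mulrDl mul1r (addrC (_ * m)).
apply: ht_D; first by apply: H; rewrite mem_head.
by apply: IH => g gL; apply: H; rewrite inE gL orbT.
Qed.

Lemma key (m : int) (mpos : 0 < m) g0 (g0D : g0 \in Delta) (hg0 : ht_eq pi a g0 m)
  mu (i : int) (ipos : 0 < i) (hmu : ht_eq pi a mu i) :
  exists g, [/\ g \in Delta, ht_eq pi a g m & 0 < dotv g mu].
Proof.
set D := [seq g <- undup Delta | htb g m].
set S := \sum_(g <- D) g.
have memD g : (g \in D) = (g \in Delta) && htb g m by rewrite mem_filter mem_undup andbC.
have orth b : b != a -> dotv S (pi b) = 0.
  move=> ba; set pb := pi b.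
  have pbnz : pb != 0 := root_nz (pinD b).
  pose s g := g - cartan g pb *: pb.
  have sK g : s (s g) = g.
    have e : cartan (s g) pb = - cartan g pb.
      rewrite /s /cartan dotvBl dotvZl.
      have : dotv pb pb != 0 by rewrite dotv_eq0.
      move=> h; field; exact: h.
    by rewrite /s e scaleNr opprK subrK.
  have sD g : g \in D -> s g \in D.
    rewrite !memD => /andP [gD /htbP hg]; apply/andP; split.
      exact: refl _ _ (pinD b) gD.
    by apply/htbP; apply: ht_refl.
  have pe : perm_eq D (map s D).
    apply: uniq_perm.
    - by rewrite filter_uniq // undup_uniq.
    - by rewrite (map_inj_uniq (can_inj sK)) filter_uniq // undup_uniq.
    move=> x; apply/idP/idP.
      by move=> xD; rewrite -(sK x); apply: map_f; apply: sD.
    by case/mapP => y yD ->; apply: sD.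
  rewrite /S dotv_suml.
  set X := \sum_(g <- D) dotv g pb.
  have : X = - X.
    rewrite {1}/X (perm_big _ pe) big_map /X -sumrN.
    apply: eq_bigr => g _; rewrite /s dotvBl dotvZl cartan_mul //; ring.
  lra.
have lvl v h : ht_eq pi a v h -> dotv S v = h%:~R * dotv S (pi a).
  move=> [c [-> <-]]; rewrite dotv_sumr (bigD1 a) //= big1 ?addr0.
    by rewrite dotvZr.
  by move=> k ka; rewrite dotvZr orth ?mulr0.
have hS : ht_eq pi a S ((size D)%:Z * m).
  by apply: ht_sum => g; rewrite memD => /andP [_ /htbP].
have g0in : g0 \in D by rewrite memD g0D; apply/htbP.
have sz : (0 < size D)%N by case: (D) g0in.
have Snz : S != 0.
  apply/eqP => S0; rewrite S0 in hS; have := ht_uniq hS ht_0.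
  move/eqP; rewrite mulf_eq0 (gt_eqF mpos) orbF; lia.
have SS := dotv_gt0 Snz; rewrite {2}/S in SS.
rewrite (lvl _ _ hS) in SS.
have cpos : 0 < ((size D)%:Z * m)%:~R :> R.
  by rewrite ltr0z; apply: mulr_gt0 => //; rewrite ltz_nat.
have Pa : 0 < dotv S (pi a) by nra.
have Smu : 0 < dotv S mu by rewrite (lvl _ _ hmu); apply: mulr_gt0 => //; rewrite ltr0z.
rewrite /S dotv_suml in Smu.
case: (boolP (has (fun g => 0 < dotv g mu) D)) => [/hasP [g gD pos] | /hasPn H].
  by move: gD; rewrite memD => /andP [gD /htbP hg]; exists g.
have : \sum_(g <- D) dotv g mu <= 0.
  rewrite big_seq; apply: sumr_le0 => g gD; have := H g gD; rewrite -leNgt.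
  done.
by rewrite leNgt Smu.
Qed.
Lemma levels theta (H : nat) : theta \in Delta -> ht_eq pi a theta H%:Z ->
  forall d k, (1 <= k)%N -> (k + d)%N = H -> exists2 g, g \in Delta & ht_eq pi a g k%:Z.
Proof.
move=> tD ht; elim=> [|d IH] k k1 e.
  by exists theta => //; rewrite addn0 in e; rewrite e.
have [g1 g1D hg1] : exists2 g, g \in Delta & ht_eq pi a g k.+1%:Z.
  by apply: IH => //; rewrite addSnnS.
have hpa : ht_eq pi a (pi a) 1 by have := ht_pi a; rewrite eqxx.
have [g [gD hg pos]] := @key (k.+1%:Z) isT g1 g1D hg1 (pi a) 1 isT hpa.
have ga : g != pi a.
  apply/eqP => E; rewrite E in hg; have := ht_uniq hg hpa; move/eqP.
  lia.
exists (g - pi a); first exact: root_sub gD (pinD a) pos ga.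
by have := ht_B hg hpa; rewrite -[k.+1]addn1 PoszD addrK.
Qed.
End S.

Theorem corollary3p3 (R : realFieldType) (n : nat) (Delta : seq 'rV[R]_n)
  (l : nat) (pi : 'I_l -> 'rV[R]_n) (theta : 'rV[R]_n) (a : 'I_l)
  (i j : nat) (htheta : int) :
  is_irred_root_system Delta ->
  is_base Delta pi ->
  is_highest_root Delta pi theta ->
  ht_eq pi a theta htheta ->
  (1 <= i)%N -> (1 <= j)%N -> (i + j)%:Z <= htheta ->
  forall mu : 'rV[R]_n, mu \in Delta -> ht_eq pi a mu i%:Z ->
  exists nu : 'rV[R]_n,
    [/\ nu \in Delta, ht_eq pi a nu j%:Z,
        mu + nu \in Delta & ht_eq pi a (mu + nu) (i + j)%:Z].
Proof.
move=> [[_ nz _] [refl integ _ _]] [pinD lin _] [tD _] ht i1 j1 le mu muD hmu.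
have [H eH] : exists H : nat, htheta = H%:Z.
  by exists `|htheta|%N; rewrite gez0_abs //; apply: le_trans le.
rewrite eH in ht le.
have ij1 : (1 <= i + j)%N by lia.
have e1 : ((i + j) + (H - (i + j)))%N = H by rewrite lez_nat in le; lia.
have [g0 g0D hg0] := @levels R n l pi a lin Delta nz refl integ pinD theta H tD ht _ _ ij1 e1.
have mpos : 0 < (i + j)%N%:Z by rewrite ltz_nat.
have ipos : 0 < i%:Z by rewrite ltz_nat.
have [g [gD hg pos]] := @key R n l pi a lin Delta nz refl integ pinD _ mpos g0 g0D hg0 mu _ ipos hmu.
have gm : g != mu.
  apply/eqP => E; rewrite E in hg; have := @ht_uniq R n l pi a lin _ _ _ hg hmu; move/eqP.
  rewrite eqz_nat; lia.
exists (g - mu); split.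
- exact: (@root_sub R n Delta nz refl integ g mu gD muD pos gm).
- by have := @ht_B R n l pi a _ _ _ _ hg hmu; rewrite PoszD (addrC (Posz i)) addrK.
- by rewrite addrC subrK.
- by rewrite addrC subrK.
Qed.
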